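(* Let $n>1$ and consider the undirected cycle $C_{2n}$ with vertices $v_1,\dots,v_n,w_1,\dots,w_n$, where $v_i$ is adjacent to $w_i$ and $w_{i-1}$ (indices of $w$ modulo $n$, so $v_1$ is adjacent to $w_1$ and $w_n$). Let $x_i,y_i\in[3]$ denote the hat colours of $v_i,w_i$, all arithmetic modulo $3$. Define guessing functions $f_i$ for $v_i$ and $g_i$ for $w_i$ by: for $i\ne1$, $f_i(y_{i-1},y_i)=y_i-1$ if $y_i\ne y_{i-1}+1$ and $f_i=y_i+1$ if $y_i=y_{i-1}+1$; $f_1(y_n,y_1)=y_1-1$ if $y_1\ne y_n-1$ and $f_1=y_1+1$ if $y_1=y_n-1$; for $i\ne n$, $g_i(x_i,x_{i+1})=x_i$ if $x_i\ne x_{i+1}+1$ and $g_i=x_i-1$ if $x_i=x_{i+1}+1$; $g_n(x_n,x_1)=x_n$ if $x_n\ne x_1$ and $g_n=x_n-1$ if $x_n=x_1$. Call a configuration $(x,y)\in[3]^n\times[3]^n$ bad if $f_i\ne x_i$ and $g_i\ne y_i$ for all $i$. Then: (a) if $n\equiv 0\pmod 3$ there is no bad configuration; in particular $C_{2n}$ is $3$-solvable; (b) if $n\equiv1\pmod3$ the bad configurations are exactly those with $x_i=y_i=a-(i-1)$ for all $i=1,\dots,n$, for some $a\in[3]$; (c) if $n\equiv2\pmod3$ the bad configurations are exactly those with $y_i=a+(i-1)$ and $x_i=a+(i-2)$ for all $i=1,\dots,n$, for some $a\in[3]$.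
   Context: An undirected graph is identified with the directed graph having both arcs for each edge; $N^-(v)$ is the set of neighbours of $v$. For $q\ge2$ let $[q]=\{0,\dots,q-1\}$. A $D$-function over $[q]$ is a map $f=(f_v)_{v\in V}:[q]^V\to[q]^V$ with each $f_v(x)$ depending only on $(x_u)_{u\in N^-(v)}$. $D$ is $q$-solvable if some $D$-function $f$ over $[q]$ has the property that for every $x\in[q]^V$ there is $v$ with $f_v(x)=x_v$. *)

(* Defs.v *)
From HB Require Import structures.
From mathcomp Require Import all_boot all_order all_algebra.
Set Implicit Arguments. Unset Strict Implicit. Unset Printing Implicit Defensive.
Import GRing.Theory.

(* A (di)graph on a finite vertex set V is a relation D : rel V, where
   D u v means there is an arc u -> v; N^-(v) = [pred u | D u v].
   The colour set [q] = {0,...,q-1} is 'I_q. *)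

Definition depends_only_on_inneighbours (V : finType) (D : rel V) (q : nat)
  (F : (V -> 'I_q) -> 'I_q) (v : V) : Prop :=
  forall x x' : V -> 'I_q, (forall u, D u v -> x u = x' u) -> F x = F x'.

Definition D_function (V : finType) (D : rel V) (q : nat)
  (f : (V -> 'I_q) -> V -> 'I_q) : Prop :=
  forall v, depends_only_on_inneighbours D (fun x => f x v) v.

Definition q_solvable (V : finType) (D : rel V) (q : nat) : Prop :=
  exists f : (V -> 'I_q) -> V -> 'I_q,
    D_function D f /\ forall x : V -> 'I_q, exists v, f x v = x v.

(* Vertices: inl i = v_{i+1}, inr j = w_{j+1} (0-based indices).
   v_i ~ w_i and v_i ~ w_{i-1} (w-indices mod n). Undirected: both arcs. *)
Definition cycle_vw_adj (n : nat) (i j : 'I_n) : bool :=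
  (val j == val i) || ((val j).+1 %% n == val i).

Definition cycle_adj (n : nat) : rel ('I_n + 'I_n) :=
  fun a b => match a, b with
             | inl i, inr j => cycle_vw_adj i j
             | inr j, inl i => cycle_vw_adj i j
             | _, _ => false
             end.

Local Open Scope ring_scope.

(* guess of v_{i+1}, from y_i (= paper's y_{i-1}, cyclically) and y_{i+1} *)
Definition fguess (n : nat) (y : 'I_n -> 'Z_3) (i : 'I_n) : 'Z_3 :=
  let yp := y (ord_pred i) in
  if val i == 0%N then (if y i != yp - 1 then y i - 1 else y i + 1)
  else (if y i != yp + 1 then y i - 1 else y i + 1).

(* guess of w_{i+1}, from x_{i+1} and x_{i+2} (cyclically) *)
Definition gguess (n : nat) (x : 'I_n -> 'Z_3) (i : 'I_n) : 'Z_3 :=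
  let xs := x (ordS i) in
  if val i == n.-1 then (if x i != xs then x i else x i - 1)
  else (if x i != xs + 1 then x i else x i - 1).

Definition bad_config (n : nat) (x y : 'I_n -> 'Z_3) : Prop :=
  forall i : 'I_n, fguess y i != x i /\ gguess x i != y i.

Arguments cycle_adj n : clear implicits.
Arguments q_solvable [V] D q.

(* Main.v *)
Require Import Defs.
From HB Require Import structures.
From mathcomp Require Import all_boot all_order all_algebra.
From Stdlib Require Import Lia.
From mathcomp Require Import zify.
Import GRing.Theory.
Local Open Scope ring_scope.

Definition g_gen (x x' : 'Z_3) := if x != x' + 1 then x else x - 1.
Definition f_gen (yp y : 'Z_3) := if y != yp + 1 then y - 1 else y + 1.
Definition g_cl (x x' : 'Z_3) := if x != x' then x else x - 1.
Definition f_cl (yp y : 'Z_3) := if y != yp - 1 then y - 1 else y + 1.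
Definition cg x y x' y' := (g_gen x x' != y) && (f_gen y y' != x').
Definition cc x y x' y' := (g_cl x x' != y) && (f_cl y y' != x').
Definition rk (c : 'Z_3) : nat := if c == 0 then 0%N else if c == 1 then 2%N else 1%N.
Definition del (c : 'Z_3) : 'Z_3 := if c == 0 then -1 else if c == 1 then 1 else 0.
Definition del' (c : 'Z_3) : 'Z_3 := if c == 0 then 0 else if c == 1 then -1 else 1.

Ltac z3 x := case: x => [[|[|[|?]]] ?].

Lemma L1 (x y x' y' : 'Z_3) :
  cg x y x' y' -> leq (rk (y'-x')) (rk (y-x)) && ((y'-x' == y-x) ==> (x' == x + del (y-x))).
Proof. by z3 x; z3 y; z3 x'; z3 y'. Qed.

Lemma L2 (x y x' y' : 'Z_3) :
  cc x y x' y' -> leq (rk (y'-x')) (rk (y-x)) && ((y'-x' == y-x) ==> (x' == x + del' (y-x))).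
Proof. by z3 x; z3 y; z3 x'; z3 y'. Qed.

Arguments L1 {x y x' y'}.
Arguments L2 {x y x' y'}.
Lemma rk_inj (a b : 'Z_3) : rk a = rk b -> a = b.
Proof. move=> h; apply/eqP; move: h; by z3 a; z3 b. Qed.

Lemma L3b (u : 'Z_3) : cg u u (u - 1) (u - 1). Proof. by z3 u. Qed.
Lemma L4b (u : 'Z_3) : cc u u u u. Proof. by z3 u. Qed.
Lemma L3c (u : 'Z_3) : cg u (u+1) (u+1) (u+1+1). Proof. by z3 u. Qed.
Lemma L4c (u : 'Z_3) : cc u (u+1) (u-1) u. Proof. by z3 u. Qed.

Lemma natZ3 k : (k%:R : 'Z_3) = (k %% 3)%:R.
Proof. by rewrite Zp_nat_mod. Qed.

Section Cyc.
Variable m : nat.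
Local Notation N := m.+2.

Lemma H1 k : (k < m.+1)%N -> ordS (inord k : 'I_N) = inord k.+1.
Proof. move=> hk; apply: val_inj; rewrite /= !inordK ?modn_small //; lia. Qed.
Lemma H2 k : (k < m.+1)%N -> ord_pred (inord k.+1 : 'I_N) = inord k.
Proof. by move=> hk; rewrite -H1 // ordSK. Qed.
Lemma H3 : ordS (inord m.+1 : 'I_N) = inord 0.
Proof. by apply: val_inj; rewrite /= !inordK // modnn. Qed.
Lemma H4 : ord_pred (inord 0 : 'I_N) = inord m.+1.
Proof. by rewrite -H3 ordSK. Qed.

Lemma fg1 (y : 'I_N -> 'Z_3) k : (k < m.+1)%N ->
  fguess y (inord k.+1) = f_gen (y (inord k)) (y (inord k.+1)).
Proof. move=> hk; rewrite /fguess /= H2 // inordK //; lia. Qed.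
Lemma fg0 (y : 'I_N -> 'Z_3) :
  fguess y (inord 0) = f_cl (y (inord m.+1)) (y (inord 0)).
Proof. by rewrite /fguess /= H4 inordK. Qed.
Lemma gg1 (x : 'I_N -> 'Z_3) k : (k < m.+1)%N ->
  gguess x (inord k) = g_gen (x (inord k)) (x (inord k.+1)).
Proof.
move=> hk; rewrite /gguess /= H1 // inordK; last lia.
by rewrite (ltn_eqF hk).
Qed.
Lemma gg0 (x : 'I_N -> 'Z_3) :
  gguess x (inord m.+1) = g_cl (x (inord m.+1)) (x (inord 0)).
Proof. by rewrite /gguess /= H3 inordK // eqxx. Qed.

Lemma bad_iff (x y : 'I_N -> 'Z_3) :
  bad_config x y <->
  (forall k, (k < m.+1)%N -> cg (x (inord k)) (y (inord k)) (x (inord k.+1)) (y (inord k.+1)))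
  /\ cc (x (inord m.+1)) (y (inord m.+1)) (x (inord 0)) (y (inord 0)).
Proof.
split.
- move=> B; split.
  + move=> k hk; have [_ g] := B (inord k); have [f _] := B (inord k.+1).
    by rewrite gg1 // in g; rewrite fg1 // in f; apply/andP.
  + have [_ g] := B (inord m.+1); have [f _] := B (inord 0).
    by rewrite gg0 in g; rewrite fg0 in f; apply/andP.
- move=> [H Hc] i; rewrite -(inord_val i).
  have hi := ltn_ord i; split.
  + case E: (nat_of_ord i) => [|j].
    * by rewrite fg0; case/andP: Hc.
    * rewrite fg1; last by rewrite E in hi.
      by case/andP: (H j ltac:(rewrite E in hi; lia)).
  + have [E|ne] := eqVneq (nat_of_ord i) m.+1.
    * by rewrite E gg0; case/andP: Hc.
    * have hk : (nat_of_ord i < m.+1)%N by lia.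
      by rewrite gg1 //; case/andP: (H _ hk).
Qed.

Lemma bad_struct (x y : 'I_N -> 'Z_3) : bad_config x y ->
  exists c, (forall k, (k < N)%N -> y (inord k) - x (inord k) = c /\
                 x (inord k) = x (inord 0) + k%:R * del c)
         /\ x (inord 0) = x (inord m.+1) + del' c.
Proof.
move=> /bad_iff [H Hc].
pose d k := y (inord k) - x (inord k).
have M k : (k < m.+1)%N -> (rk (d k.+1) <= rk (d k))%N.
  by move=> hk; case/andP: (L1 (H k hk)).
have M0 : (rk (d 0) <= rk (d m.+1))%N by case/andP: (L2 Hc).
have A j k : (k <= j)%N -> (j < N)%N -> (rk (d j) <= rk (d k))%N.
  elim: j => [|j IH] hkj hj; first by have -> : k = 0%N by lia.
  have [->|ne] := eqVneq k j.+1; first by [].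
  apply: leq_trans (M j _) (IH _ _); lia.
have D k : (k < N)%N -> d k = d 0.
  move=> hk; apply: rk_inj; apply/eqP; rewrite eqn_leq A //=.
  apply: leq_trans M0 (A _ _ _ _); lia.
exists (d 0); split.
- elim=> [|k IH] hk; first by rewrite mul0r addr0.
  split; first exact: D.
  have hk' : (k < m.+1)%N by lia.
  have hk0 : (k < N)%N by lia.
  case/andP: (L1 (H k hk')) => _ /implyP.
  rewrite -/(d k) -/(d k.+1) (D k.+1) // (D k) // => /(_ (eqxx _)) /eqP ->.
  by rewrite (IH hk0).2 -natr1 mulrDl mul1r addrA.
- case/andP: (L2 Hc) => _ /implyP.
  rewrite -/(d 0) -/(d m.+1) D // => /(_ (eqxx _)) /eqP.
  done.
Qed.
End Cyc.

Lemma L3b' (a t : 'Z_3) : cg (a - t) (a - t) (a - (t + 1)) (a - (t + 1)).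
Proof. by z3 a; z3 t. Qed.
Lemma L3c' (a t : 'Z_3) : cg (a + t - 1) (a + t) (a + (t + 1) - 1) (a + (t + 1)).
Proof. by z3 a; z3 t. Qed.
Lemma L4b' (a : 'Z_3) : cc (a - (1%:R - 1)) (a - (1%:R - 1)) (a - 0%:R) (a - 0%:R).
Proof. by z3 a. Qed.
Lemma L4c' (a : 'Z_3) : cc (a + (2%:R - 1) - 1) (a + (2%:R - 1)) (a + 0%:R - 1) (a + 0%:R).
Proof. by z3 a. Qed.

Theorem theorem16 (n : nat) (hn : (1 < n)%N) :
  ((n %% 3 = 0)%N ->
     (forall x y : 'I_n -> 'Z_3, ~ bad_config x y) /\ q_solvable (cycle_adj n) 3)
  /\
  ((n %% 3 = 1)%N ->
     forall x y : 'I_n -> 'Z_3,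
       bad_config x y <->
       exists a : 'Z_3, forall i : 'I_n,
         x i = a - (val i)%:R /\ y i = a - (val i)%:R)
  /\
  ((n %% 3 = 2)%N ->
     forall x y : 'I_n -> 'Z_3,
       bad_config x y <->
       exists a : 'Z_3, forall i : 'I_n,
         y i = a + (val i)%:R /\ x i = a + (val i)%:R - 1).
Proof.
case: n hn => [|[|m]] // _.
have hm1 : ((m.+1)%:R : 'Z_3) = (m.+2 %% 3)%:R - 1 by rewrite -natZ3 -[(m.+2)%:R]natr1 addrK.
have key : forall x y : 'I_m.+2 -> 'Z_3, bad_config x y -> exists c,
   (forall k, (k < m.+2)%N -> y (inord k) - x (inord k) = c /\
                 x (inord k) = x (inord 0) + k%:R * del c)
   /\ ((m.+2 %% 3)%:R - 1) * del c + del' c = 0.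
  move=> x y /bad_struct [c [Hk Hc]]; exists c; split => //.
  have [_ e] := Hk m.+1 (ltnSn _); rewrite e in Hc.
  rewrite -hm1; apply: (addrI (x (inord 0))); by rewrite addr0 addrA -Hc.
split; [|split].
- move=> h0; have nb : forall x y : 'I_m.+2 -> 'Z_3, ~ bad_config x y.
    move=> x y /key [c [_ E]]; move: E; rewrite h0 => /eqP; by z3 c.
  split=> //.
  pose F := fun (z : 'I_m.+2 + 'I_m.+2 -> 'I_3) v => match v with
                     | inl i => fguess (fun j => z (inr j)) i
                     | inr j => gguess (fun i => z (inl i)) j end.
  exists F.
  split.
  + move=> [i|j] z z' Hzz; rewrite /F /=.
    * rewrite /fguess /= (Hzz (inr i)); last by rewrite /= /cycle_vw_adj eqxx.
      rewrite (Hzz (inr (ord_pred i))) //.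
      rewrite /= /cycle_vw_adj; apply/orP; right.
      by have := congr1 val (ord_predK i) => /= ->.
    * rewrite /gguess /= (Hzz (inl j)); last by rewrite /= /cycle_vw_adj eqxx.
      by rewrite (Hzz (inl (ordS j))) // /= /cycle_vw_adj eqxx orbT.
  + move=> z; have := nb (fun i => z (inl i)) (fun j => z (inr j)).
    case: (pickP (fun v => F z v == z v)) => [v /eqP hv _| hn]; first by exists v.
    case; move=> i; split; apply/negP => /eqP e.
    * by move: (hn (inl i)); rewrite /= e eqxx.
    * by move: (hn (inr i)); rewrite /= e eqxx.
- move=> h1 x y; split.
  + move/key=> [c [Hk E]].
    have c0 : c = 0 by apply/eqP; move: E; clear Hk; rewrite h1 => /eqP; z3 c.
    subst c; exists (x (inord 0)) => i.
    have [e1 e2] := Hk i (ltn_ord i); rewrite inord_val in e1 e2.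
    have ey : y i = x i by rewrite -(subrK (x i) (y i)) e1 add0r.
    rewrite ey e2 /del eqxx mulrN1; by split.
  + case=> a Ha; apply/bad_iff; split.
    * move=> k hk; have [ex ey] := Ha (inord k); have [ex' ey'] := Ha (inord k.+1).
      rewrite ex ey ex' ey' /= !inordK //; [|lia].
      rewrite -natr1; exact: L3b'.
    * have [ex ey] := Ha (inord m.+1); have [ex' ey'] := Ha (inord 0).
      rewrite ex ey ex' ey' /= !inordK // hm1 h1; exact: L4b'.
- move=> h2 x y; split.
  + move/key=> [c [Hk E]].
    have c1 : c = 1 by apply/eqP; move: E; clear Hk; rewrite h2 => /eqP; z3 c.
    subst c; exists (x (inord 0) + 1) => i.
    have [e1 e2] := Hk i (ltn_ord i); rewrite inord_val in e1 e2.
    have ey : y i = x i + 1 by rewrite -(subrK (x i) (y i)) e1 addrC.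
    rewrite ey e2 /del /= mulr1; split; first by rewrite addrAC.
    by rewrite [x (inord 0) + 1 + _]addrAC addrK.
  + case=> a Ha; apply/bad_iff; split.
    * move=> k hk; have [ey ex] := Ha (inord k); have [ey' ex'] := Ha (inord k.+1).
      rewrite ex ey ex' ey' /= !inordK //; [|lia].
      rewrite -natr1; exact: L3c'.
    * have [ey ex] := Ha (inord m.+1); have [ey' ex'] := Ha (inord 0).
      rewrite ex ey ex' ey' /= !inordK // hm1 h2; exact: L4c'.
Qed.
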